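(* The two-dimensional subalgebras of ${\rm A}_2$ are exactly $\langle e_1,e_2\rangle$ and $\langle e_2,e_3\rangle$; up to automorphisms of ${\rm A}_2$ every two-dimensional subalgebra is equivalent to $\langle e_1,e_2\rangle$ or $\langle e_2,e_3\rangle$.
   Context: ${\rm A}_2$ is the complex algebra with basis $e_1,e_2,e_3$, unit $e_1$ ($e_1e_i=e_ie_1=e_i$), and $e_3e_3=e_2$; all other products of basis elements are zero. A subalgebra is a linear subspace closed under multiplication (it need not contain $e_1$). Equivalence up to automorphisms means one is mapped onto the other by an algebra automorphism. $\langle S\rangle$ denotes linear span. *)

(* Defs.v *)
From mathcomp Require Import all_boot all_algebra.
From mathcomp Require Import complex Rstruct.
Set Implicit Arguments.
Unset Strict Implicit.
Unset Printing Implicit Defensive.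
Import GRing.Theory.
Local Open Scope ring_scope.

Definition CC : fieldType := complex Rdefinitions.R.

(* Underlying vector space of A_2: C^3, coordinates w.r.t. e_1, e_2, e_3
   (indices 0, 1, 2). *)
Definition A2 := 'rV[CC]_3.

Definition i1 : 'I_3 := @Ordinal 3 0 isT.
Definition i2 : 'I_3 := @Ordinal 3 1 isT.
Definition i3 : 'I_3 := @Ordinal 3 2 isT.

Definition e1 : A2 := delta_mx 0 i1.
Definition e2 : A2 := delta_mx 0 i2.
Definition e3 : A2 := delta_mx 0 i3.

Definition basis_e (i : 'I_3) : A2 :=
  if i == i1 then e1 else if i == i2 then e2 else e3.

Definition table (i j : 'I_3) : A2 :=
  if i == i1 then basis_e j
  else if j == i1 then basis_e i
  else if (i == i3) && (j == i3) then e2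
  else 0.

Definition mulA (u v : A2) : A2 :=
  \sum_(i < 3) \sum_(j < 3) (u 0 i * v 0 j) *: table i j.

Definition is_subalgebra (V : {vspace A2}) : Prop :=
  forall u v, u \in V -> v \in V -> mulA u v \in V.

Definition is_automorphism (f : 'End(A2)) : Prop :=
  lker f = 0%VS /\ (forall u v, f (mulA u v) = mulA (f u) (f v)) /\ f e1 = e1.

Definition S12 : {vspace A2} := <<[:: e1; e2]>>%VS.
Definition S23 : {vspace A2} := <<[:: e2; e3]>>%VS.

(* Main.v *)
Require Import Defs.
From mathcomp Require Import all_boot all_algebra.
From mathcomp Require Import complex Rstruct.
Local Open Scope ring_scope.
Import GRing.Theory.

Definition cc (u : A2) (k : 'I_3) : CC := (u : 'rV[CC]_3) 0 k.

Lemma coordE (u : A2) : u = cc u i1 *: e1 + cc u i2 *: e2 + cc u i3 *: e3.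
Proof.
apply/rowP => k; rewrite !mxE /cc.
have -> : (0 : 'I_1) = ord0 by apply/val_inj.
case: k => [[|[|[|k]]] Hk] //=; rewrite /i1 /i2 /i3 /=.
- by rewrite !mulr1 !mulr0 !addr0; congr (u _ _); apply/val_inj.
- by rewrite !mulr1 !mulr0 addr0 add0r; congr (u _ _); apply/val_inj.
- by rewrite !mulr1 !mulr0 !add0r; congr (u _ _); apply/val_inj.
Qed.

Lemma ACl (M : zmodType) (a b c d f g : M) :
  a + b + c + d + (f + g) = a + (b + d + g) + (c + f).
Proof.
rewrite -!addrA; do 2 congr (_ + _).
rewrite addrCA; congr (_ + _).
by rewrite addrA addrC.
Qed.

Lemma mulAE (u v : A2) : Defs.mulA u v =
  (cc u i1 * cc v i1) *: e1 + (cc u i1 * cc v i2 + cc u i2 * cc v i1 + cc u i3 * cc v i3) *: e2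
  + (cc u i1 * cc v i3 + cc u i3 * cc v i1) *: e3.
Proof.
rewrite /Defs.mulA.
rewrite !big_ord_recr !big_ord0 /=.
have E1 : (lift ord_max (lift ord_max ord0) : 'I_3) = i1 by apply/val_inj.
have E2 : (lift ord_max (@ord_max 1) : 'I_3) = i2 by apply/val_inj.
have E3 : (@ord_max 2 : 'I_3) = i3 by apply/val_inj.
rewrite ?E1 ?E2 ?E3 /table /basis_e /=.
rewrite !scaler0 !add0r !addr0 !scalerDl /cc.
have W1 : widen_ord (leqnSn 2) (widen_ord (leqnSn 1) ord_max) = i1 :> 'I_3 by apply/val_inj.
have W2 : widen_ord (leqnSn 2) ord_max = i2 :> 'I_3 by apply/val_inj.
rewrite W1 W2; exact: ACl.
Qed.

From mathcomp Require Import ring.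

Lemma ccD u v k : cc (u + v) k = cc u k + cc v k. Proof. by rewrite /cc mxE. Qed.
Lemma ccN u k : cc (- u) k = - cc u k. Proof. by rewrite /cc mxE. Qed.
Lemma ccB u v k : cc (u - v) k = cc u k - cc v k. Proof. by rewrite ccD ccN. Qed.
Lemma ccZ a u k : cc (a *: u) k = a * cc u k. Proof. by rewrite /cc mxE. Qed.
Lemma cc0 k : cc 0 k = 0. Proof. by rewrite /cc mxE. Qed.
Lemma cce (i k : 'I_3) : cc (delta_mx 0 i) k = (i == k)%:R.
Proof. by rewrite /cc mxE eqxx /= eq_sym. Qed.
Lemma cc11 : cc e1 i1 = 1. Proof. by rewrite /e1 cce. Qed.
Lemma cc12 : cc e1 i2 = 0. Proof. by rewrite /e1 cce. Qed.
Lemma cc13 : cc e1 i3 = 0. Proof. by rewrite /e1 cce. Qed.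
Lemma cc21 : cc e2 i1 = 0. Proof. by rewrite /e2 cce. Qed.
Lemma cc22 : cc e2 i2 = 1. Proof. by rewrite /e2 cce. Qed.
Lemma cc23 : cc e2 i3 = 0. Proof. by rewrite /e2 cce. Qed.
Lemma cc31 : cc e3 i1 = 0. Proof. by rewrite /e3 cce. Qed.
Lemma cc32 : cc e3 i2 = 0. Proof. by rewrite /e3 cce. Qed.
Lemma cc33 : cc e3 i3 = 1. Proof. by rewrite /e3 cce. Qed.

Definition ccEs := (ccD, ccB, ccN, ccZ, cc0, cc11, cc12, cc13, cc21, cc22, cc23, cc31, cc32, cc33).

Lemma ccM u v :
  [/\ cc (Defs.mulA u v) i1 = cc u i1 * cc v i1,
      cc (Defs.mulA u v) i2 = cc u i1 * cc v i2 + cc u i2 * cc v i1 + cc u i3 * cc v i3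
    & cc (Defs.mulA u v) i3 = cc u i1 * cc v i3 + cc u i3 * cc v i1].
Proof. rewrite mulAE !ccEs; split; ring. Qed.

Lemma eq_cc u v : cc u i1 = cc v i1 -> cc u i2 = cc v i2 -> cc u i3 = cc v i3 -> u = v.
Proof. by move=> h1 h2 h3; rewrite (coordE u) (coordE v) h1 h2 h3. Qed.

Lemma mem12 u : u \in S12 <-> cc u i3 = 0.
Proof.
split.
- rewrite /S12 span_cons span_seq1 => /memv_addP [x /vlineP[a ->] [y /vlineP[b ->] ->]].
  by rewrite !ccEs; ring.
- move=> h; rewrite (coordE u) h scale0r addr0.
  by apply: memvD; apply: memvZ; apply: memv_span; rewrite !inE eqxx ?orbT.
Qed.

Lemma mem23 u : u \in S23 <-> cc u i1 = 0.
Proof.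
split.
- rewrite /S23 span_cons span_seq1 => /memv_addP [x /vlineP[a ->] [y /vlineP[b ->] ->]].
  by rewrite !ccEs; ring.
- move=> h; rewrite (coordE u) h scale0r add0r.
  by apply: memvD; apply: memvZ; apply: memv_span; rewrite !inE eqxx ?orbT.
Qed.

Lemma e_neq0 (i : 'I_3) : delta_mx 0 i != 0 :> A2.
Proof. apply/eqP => /(congr1 (fun w => cc w i)); rewrite cce cc0 eqxx; exact/eqP/oner_neq0. Qed.

Lemma dimS12 : \dim S12 = 2%N.
Proof.
have : free [:: e1; e2].
  rewrite free_cons seq1_free e_neq0 andbT span_seq1.
  apply/vlineP => -[k /(congr1 (fun w => cc w i1))]; rewrite !ccEs mulr0.
  exact/eqP/oner_neq0.
by move/eqP.
Qed.

Lemma dimS23 : \dim S23 = 2%N.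
Proof.
have : free [:: e2; e3].
  rewrite free_cons seq1_free e_neq0 andbT span_seq1.
  apply/vlineP => -[k /(congr1 (fun w => cc w i2))]; rewrite !ccEs mulr0.
  exact/eqP/oner_neq0.
by move/eqP.
Qed.

Lemma dimfull : \dim (fullv : {vspace A2}) = 3%N.
Proof. by rewrite dimvf. Qed.

Lemma part1 (V : {vspace A2}) : is_subalgebra V -> \dim V = 2%N -> V = S12 \/ V = S23.
Proof.
move=> HV HD.
case: (boolP (V <= S23)%VS) => Hs.
  by right; apply/eqP; rewrite eqEdim Hs dimS23 HD.
have [u Vu nu] := subvPn Hs.
have u1 : cc u i1 != 0 by apply: contra nu => /eqP h; apply/mem23.
have [u' Vu' h1] : exists2 u', u' \in V & cc u' i1 = 1.
  by exists ((cc u i1)^-1 *: u); [apply: memvZ | rewrite ccZ mulVf].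
have Ve1 : e1 \in V.
  have -> : e1 = Defs.mulA u' (Defs.mulA u' u') - 3%:R *: Defs.mulA u' u' + 3%:R *: u'.
    have [a1 a2 a3] := ccM u' u'; have [b1 b2 b3] := ccM u' (Defs.mulA u' u').
    apply: eq_cc; rewrite !ccEs ?b1 ?b2 ?b3 ?a1 ?a2 ?a3 h1; ring.
  by apply: memvD; [apply: memvB; [apply: (HV) => //; apply: (HV) | apply: memvZ; apply: (HV)] | apply: memvZ].
case: (boolP (V <= <[e1]>)%VS) => H1.
  by have := dimvS H1; rewrite dim_vline HD; case: (_ != 0).
have [v Vv nv] := subvPn H1.
have [w [Vw w1 wE]] : exists w, [/\ w \in V, cc w i1 = 0 & v = w + cc v i1 *: e1].
  exists (v - cc v i1 *: e1); split.
  - by apply: memvB => //; apply: memvZ.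
  - by rewrite !ccEs; ring.
  - by rewrite subrK.
have Vw2 : Defs.mulA w w \in V by apply: (HV).
have w2E : Defs.mulA w w = (cc w i3 ^+ 2) *: e2.
  have [a1 a2 a3] := ccM w w.
  apply: eq_cc; rewrite ?a1 ?a2 ?a3 !ccEs w1; ring.
case: (eqVneq (cc w i3) 0) => hb.
- have ha : cc w i2 != 0.
    apply: contra nv => /eqP ha; apply/vlineP; exists (cc v i1).
    rewrite wE; apply: eq_cc; by rewrite !ccEs ?w1 ?ha ?hb ?mulr1 ?mulr0 ?add0r.
  have Ve2 : e2 \in V.
    have -> : e2 = (cc w i2)^-1 *: w.
      apply: eq_cc; rewrite !ccEs ?w1 ?hb ?mulr0 ?mulVf //.
    exact: memvZ.
  left; apply/eqP; rewrite eq_sym eqEdim dimS12 HD leqnn andbT.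
  by apply/span_subvP => x; rewrite !inE => /orP[] /eqP ->.
- exfalso.
  have Ve2 : e2 \in V.
    have -> : e2 = (cc w i3 ^+ 2)^-1 *: Defs.mulA w w.
      by rewrite w2E scalerA mulVf ?scale1r // expf_neq0.
    exact: memvZ.
  have Ve3 : e3 \in V.
    have -> : e3 = (cc w i3)^-1 *: (w - cc w i2 *: e2).
      by apply: eq_cc; rewrite !ccEs ?w1 ?mulr0 ?mulr1 ?subr0 ?subrr ?mulr0 ?mulVf.
    by apply: memvZ; apply: memvB => //; apply: memvZ.
  have : (fullv <= V)%VS.
    apply/subvP => x _; rewrite (coordE x).
    by apply: memvD; [apply: memvD|]; apply: memvZ.
  by move/dimvS; rewrite dimfull HD.
Qed.

Lemma S12_sub : is_subalgebra S12.
Proof.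
move=> u v /mem12 hu /mem12 hv; apply/mem12.
by have [_ _ ->] := ccM u v; rewrite hu hv mulr0 mul0r addr0.
Qed.

Lemma S23_sub : is_subalgebra S23.
Proof.
move=> u v /mem23 hu /mem23 hv; apply/mem23.
by have [-> _ _] := ccM u v; rewrite hu mul0r.
Qed.

Theorem mainTheorem7 :
  (forall V : {vspace A2},
     (is_subalgebra V /\ \dim V = 2%N) <-> (V = S12 \/ V = S23)) /\
  (forall V : {vspace A2}, is_subalgebra V -> \dim V = 2%N ->
     exists f : 'End(A2), is_automorphism f /\
       ((f @: V)%VS = S12 \/ (f @: V)%VS = S23)).
Proof.
split.
  move=> V; split; first by case=> ??; apply: part1.
  case=> ->; split; [exact: S12_sub | exact: dimS12 | exact: S23_sub | exact: dimS23].
move=> V HV HD; exists \1%VF; split.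
  split; first by apply/eqP/lker0P => x y; rewrite !id_lfunE.
  by split=> [u v|]; rewrite !id_lfunE.
by rewrite lim1g; apply: part1.
Qed.
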